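(* Let $n\ge3$ be odd, $d,R\in\mathbb{Q}$, $d\ne0$, $R$ not a square, $D=d^2-R$, $\zeta$ a primitive $n$th root of unity and $K=\mathbb{Q}(\sqrt R(\zeta-\zeta^{-1}))$. If $f_n=f_n(Z,d,R)$ has a zero in $\mathbb{Q}$, then the splitting field $L\subseteq\mathbb{C}$ of $f_n$ over $\mathbb{Q}$ equals $K$.
   Context: $f_n(Z,d,R)=\sum_{j=0}^{(n-1)/2}(-1)^j\frac{n}{n-j}\binom{n-j}{j}D^jZ^{n-2j}-2dD^{(n-1)/2}$, which equals $\sqrt D^{\,n}F_n(Z/\sqrt D)-2dD^{(n-1)/2}$ where $F_n(Z)=2T_n(Z/2)$ and $T_n$ is the Chebyshev polynomial of the first kind. *)

(* Defs.v *)
(* complex numbers are modelled by algC (algebraic complex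
   numbers); all numbers involved are algebraic. *)
From HB Require Import structures.
From mathcomp Require Import all_boot all_order all_algebra all_field.
Set Implicit Arguments. Unset Strict Implicit. Unset Printing Implicit Defensive.
Import Order.TTheory GRing.Theory Num.Theory.
Local Open Scope ring_scope.

Definition Dval (d R : rat) : rat := d ^+ 2 - R.

(* f_n(Z,d,R) = sum_{j=0}^{(n-1)/2} (-1)^j n/(n-j) C(n-j,j) D^j Z^{n-2j}
                - 2 d D^{(n-1)/2};   for n odd, (n-1)/2 = n./2 *)
Definition fpoly (n : nat) (d R : rat) : {poly rat} :=
  \sum_(j < n./2.+1)
     ((-1) ^+ j * (n%:R / (n - j)%:R) * ('C(n - j, j))%:R * Dval d R ^+ j)
       *: 'X^(n - 2 * j)
  - (2 * d * Dval d R ^+ n./2)%:P.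

Definition gen_field (S : algC -> Prop) (x : algC) : Prop :=
  forall P : algC -> Prop,
    (forall s, S s -> P s) ->
    P 0 -> P 1 ->
    (forall a b, P a -> P b -> P (a + b)) ->
    (forall a, P a -> P (- a)) ->
    (forall a b, P a -> P b -> P (a * b)) ->
    (forall a, P a -> P (a^-1)) ->
    P x.

Definition splitting_field_C (p : {poly rat}) : algC -> Prop :=
  gen_field (fun z => root (map_poly ratr p) z).

(* Main.v *)
Require Import Defs.
From HB Require Import structures.
From mathcomp Require Import all_boot all_order all_algebra all_field.
From mathcomp Require Import ring lra zify.
Import Order.TTheory GRing.Theory Num.Theory.
Local Open Scope ring_scope.

Fixpoint dk (n j : nat) : nat :=
  match n with
  | 0 => if j == 0%N then 2%N else 0%N
  | 1 => if j == 0%N then 1%N else 0%N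
  | (n'.+1 as m).+1 => (dk m j + (if j is j'.+1 then dk n' j' else 0))%N
  end.

Lemma dkS n j : dk n.+2 j = (dk n.+1 j + (if j is j'.+1 then dk n j' else 0))%N.
Proof. by []. Qed.

Lemma dk_zero n j : (n < j.*2)%N -> dk n j = 0%N.
Proof.
elim/ltn_ind: n j => [[|[|n]]] IH j H.
- by case: j H => [|[]].
- by case: j H => [|[]].
rewrite dkS (IH n.+1) //; last lia.
case: j H => [|j] H //; rewrite (IH n) //; lia.
Qed.

Lemma dk_add n j : (0 < n)%N -> (j < n)%N ->
  dk n j = ('C(n - j, j) + (if j is i.+1 then 'C((n - i).-2, i) else 0))%N.
Proof.
elim/ltn_ind: n j => [[|[|[|n]]]] IH j // _ Hj.
- by case: j Hj => [|[]].
- by case: j Hj => [|[|[]]].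
case: j Hj => [|i] Hi; rewrite dkS.
  rewrite (IH n.+2) // !subn0 !bin0 //.
case: (ltnP i n.+1) => Hin.
- have E1 : (n.+3 - i.+1 = (n - i).+2)%N by lia.
  have E0 : ((n.+3 - i).-2 = (n - i).+1)%N by lia.
  rewrite E1 E0 (IH n.+2 (ltnSn _) i.+1 isT Hin).
  have E2 : (n.+2 - i.+1 = (n - i).+1)%N by lia.
  have E3 : ((n.+2 - i).-2 = (n - i))%N by lia.
  rewrite E2 E3.
  case: i Hi Hin E1 E0 E2 E3 => [|i] Hi Hin E1 E0 E2 E3.
  + rewrite (IH n.+1) // !subn0 !bin0 !binS !bin0. lia.
  + rewrite (IH n.+1 (ltnW (ltnSn _)) i.+1 isT ltac:(lia)).
    have E4 : (n.+1 - i.+1 = (n - i.+1).+1)%N by lia.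
    have E5 : ((n.+1 - i).-2 = (n - i.+1))%N by lia.
    rewrite E4 E5 !binS. lia.
- have -> : i = n.+1 by lia.
  rewrite !dk_zero; try lia.
  have -> : (n.+3 - n.+2 = 1)%N by lia.
  have -> : ((n.+3 - n.+1).-2 = 0)%N by lia.
  by rewrite !bin_small.
Qed.

Lemma dk_mul n j : (0 < n)%N -> (j < n)%N -> ((n - j) * dk n j = n * 'C(n - j, j))%N.
Proof.
move=> Hn Hj; rewrite dk_add //.
case: j Hj => [|i] Hi; first by rewrite subn0 addn0.
have := mul_bin_diag (n - i.+1) i.
have -> : ((n - i.+1).-1 = (n - i).-2)%N by lia.
move=> E; rewrite mulnDr E; lia.
Qed.
Arguments dk : simpl never.


Section Dickson.
Variable F : fieldType.
Variables a x : F.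

Definition Sd (N n : nat) : F :=
  \sum_(j < N) (dk n j)%:R * (-a) ^+ j * x ^+ (n - 2 * j).

Lemma Sd_grow N n : (n < N.*2)%N -> Sd N.+1 n = Sd N n.
Proof.
move=> H; rewrite /Sd big_ord_recr /= dk_zero // mul0r mul0r addr0 //.
Qed.

Lemma Sd_widen N M n : (n < N.*2)%N -> (N <= M)%N -> Sd M n = Sd N n.
Proof.
move=> H; elim: M => [|M IH] HM.
  by have -> : N = 0%N by lia.
case: (ltngtP N M.+1) HM => // HNM _.
rewrite Sd_grow ?IH //; lia.
by rewrite HNM.
Qed.

Lemma Sd_rec N n : (n.+1 <= N)%N -> Sd N.+1 n.+2 = x * Sd N.+1 n.+1 - a * Sd N n.
Proof.
move=> HN.
rewrite /Sd.
pose dkp j := if j is j'.+1 then dk n j' else 0%N.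
have dkS' j : dk n.+2 j = (dk n.+1 j + dkp j)%N by [].
under eq_bigr => j _ do rewrite dkS' natrD !mulrDl.
rewrite big_split [X in _ + X = _]big_ord_recl {1}/dkp mul0r mul0r /= add0r.
rewrite mulr_sumr.
congr (_ + _).
  apply: eq_bigr => j _.
  case: (leqP (2 * j) n.+1) => Hj.
    have -> : (n.+2 - 2 * j = (n.+1 - 2 * j).+1)%N by lia.
    by rewrite exprS; ring.
  by rewrite dk_zero ?mul0r ?mulr0 //; lia.
rewrite mulr_sumr -sumrN.
apply: eq_bigr => j _.
rewrite /bump /dkp /=.
have -> : (n.+2 - 2 * j.+1 = n - 2 * j)%N by lia.
rewrite exprS; ring.
Qed.

Variable v : F.
Hypothesis vnz : v != 0.
Hypothesis xE : x = v + a / v.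

Definition Tv (n : nat) : F := v ^+ n + (a / v) ^+ n.

Lemma Tv_rec n : Tv n.+2 = x * Tv n.+1 - a * Tv n.
Proof.
rewrite /Tv xE !exprS; field; exact: vnz.
Qed.

Lemma Sd_Tv n N : (n < N)%N -> Sd N n = Tv n.
Proof.
elim/ltn_ind: n N => [[|[|n]]] IH N HN.
- rewrite (@Sd_widen 1%N N 0%N) //; try lia.
  rewrite /Sd big_ord1 /Tv /dk /= !expr0; ring.
- rewrite (@Sd_widen 1%N N 1%N) //; try lia.
  rewrite /Sd big_ord1 /Tv xE /dk /= !expr0 !expr1 mulr1 mul1r; reflexivity.
- destruct N as [|N]; first by [].
  rewrite Sd_rec; last lia.
  rewrite (IH n.+1) //; last lia.
  rewrite (IH n) //; last lia.
  by rewrite Tv_rec.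
Qed.
End Dickson.


Lemma fpolyE n d R : (0 < n)%N ->
  fpoly n d R = \sum_(j < n./2.+1) ((dk n j)%:R * (- Dval d R) ^+ j) *: 'X^(n - 2 * j)
     - (2 * d * Dval d R ^+ n./2)%:P.
Proof.
move=> Hn; rewrite /fpoly; congr (_ - _); apply: eq_bigr => j _.
congr (_ *: _).
have Hj2 : (j.*2 <= n)%N by rewrite -geq_half_double -ltnS.
have Hj : (j < n)%N by lia.
have := @dk_mul n j Hn Hj => /(congr1 (fun k => k%:R : rat)); rewrite !natrM => E.
have Hnz : ((n - j)%:R : rat) != 0 by rewrite pnatr_eq0; lia.
have -> : ((dk n j)%:R : rat) = n%:R / (n - j)%:R * 'C(n - j, j)%:R.
  apply: (mulfI Hnz); rewrite E.
  move: Hnz; set t := ((n - j)%:R : rat) => Hnz.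
  by rewrite mulrA [t * _]mulrC divfK.
rewrite [(- Dval d R) ^+ j]exprNn.
move: (('C(n - j, j))%:R : rat) (n%:R / (n-j)%:R : rat) ((-1) ^+ j : rat) (Dval d R ^+ j) => c t s D.
ring.
Qed.


Lemma fpoly_eval n d R (v : algC) : (0 < n)%N -> v != 0 ->
  (map_poly ratr (fpoly n d R)).[v + ratr (Dval d R) / v] =
  v ^+ n + (ratr (Dval d R) / v) ^+ n - ratr (2 * d * Dval d R ^+ n./2).
Proof.
move=> Hn vnz.
rewrite fpolyE // rmorphB /= rmorph_sum /= hornerD hornerN horner_sum map_polyC hornerC /=.
congr (_ - _).
transitivity (@Sd _ (ratr (Dval d R)) (v + ratr (Dval d R) / v) n.+1 n); last first.
  exact: (@Sd_Tv _ (ratr (Dval d R)) _ v vnz erefl n n.+1).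
rewrite (@Sd_widen _ _ _ n./2.+1 n.+1 n); last first.
- by rewrite ltnS leq_half_double; lia.
- by rewrite -ltn_half_double.
rewrite /Sd; apply: eq_bigr => j _.
rewrite map_polyZ map_polyXn hornerZ hornerXn rmorphM rmorphXn rmorphN rmorph_nat.
by [].
Qed.


Section GF.
Variable S : algC -> Prop.
Local Notation G := (gen_field S).

Lemma gfS s : S s -> G s. Proof. by move=> Hs P HS *; apply: HS. Qed.
Lemma gf0 : G 0. Proof. by move=> P *. Qed.
Lemma gf1 : G 1. Proof. by move=> P *. Qed.
Lemma gfD a b : G a -> G b -> G (a + b).
Proof. move=> Ha Hb P H1 H2 H3 H4 H5 H6 H7. apply H4; [exact: (Ha P H1 H2 H3 H4 H5 H6 H7)|exact: (Hb P H1 H2 H3 H4 H5 H6 H7)]. Qed.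
Lemma gfN a : G a -> G (- a).
Proof. move=> Ha P H1 H2 H3 H4 H5 H6 H7; apply H5; exact: (Ha P H1 H2 H3 H4 H5 H6 H7). Qed.
Lemma gfM a b : G a -> G b -> G (a * b).
Proof. move=> Ha Hb P H1 H2 H3 H4 H5 H6 H7; apply H6; [exact: (Ha P H1 H2 H3 H4 H5 H6 H7)|exact: (Hb P H1 H2 H3 H4 H5 H6 H7)]. Qed.
Lemma gfV a : G a -> G (a^-1).
Proof. move=> Ha P H1 H2 H3 H4 H5 H6 H7; apply H7; exact: (Ha P H1 H2 H3 H4 H5 H6 H7). Qed.
Lemma gfB a b : G a -> G b -> G (a - b).
Proof. by move=> Ha Hb; apply: gfD => //; apply: gfN. Qed.
Lemma gfdiv a b : G a -> G b -> G (a / b).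
Proof. by move=> Ha Hb; apply: gfM => //; apply: gfV. Qed.
Lemma gfX a k : G a -> G (a ^+ k).
Proof. move=> Ha; elim: k => [|k IH]; [exact: gf1|rewrite exprS; exact: gfM]. Qed.
Lemma gf_nat k : G k%:R.
Proof. elim: k => [|k IH]; [exact: gf0|rewrite mulrS; apply: gfD => //; exact: gf1]. Qed.
Lemma gf_int (z : int) : G z%:~R.
Proof.
case: z => k; first exact: gf_nat.
rewrite NegzE mulrNz; apply: gfN; exact: gf_nat.
Qed.
Lemma gf_rat (q : rat) : G (ratr q).
Proof.
have -> : ratr q = (numq q)%:~R / (denq q)%:~R :> algC.
  by rewrite -{1}[q]divq_num_den fmorph_div !rmorph_int.
by apply: gfdiv; apply: gf_int.
Qed.
End GF.

Lemma gf_mono (S T : algC -> Prop) x :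
  (forall s, S s -> gen_field T s) -> gen_field S x -> gen_field T x.
Proof.
move=> HST Hx; apply: (Hx (gen_field T)) => //.
- exact: (@gfD T).
- exact: (@gfN T).
- exact: (@gfM T).
- exact: (@gfV T).
Qed.

Lemma gf_Crat S c : c \in Crat -> gen_field S c.
Proof. by move/CratP=> [a ->]; apply: gf_rat. Qed.


Lemma quad_solve (Dc z : algC) : Dc != 0 -> exists v, v != 0 /\ v + Dc / v = z.
Proof.
move=> HD.
set s0 := sqrtC (z ^+ 2 - 4 * Dc).
have Hs : s0 ^+ 2 = z ^+ 2 - 4 * Dc by rewrite sqrtCK.
have vnz : z + s0 != 0.
  apply/negP => /eqP H.
  have Hs0 : s0 = - z.
    by apply/eqP; rewrite -subr_eq0 opprK addrC H.
  move: Hs; rewrite Hs0 sqrrN => /eqP; rewrite -subr_eq0 opprB addrC addrNK.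
  by rewrite mulf_eq0 pnatr_eq0 (negbTE HD).
exists ((z + s0) / 2); split.
  by rewrite mulf_eq0 negb_or vnz invr_eq0 pnatr_eq0.
have -> : Dc = (z ^+ 2 - s0 ^+ 2) / 4 by rewrite Hs; field.
by field.
Qed.

Lemma pow_split (x sg : algC) : x \in Crat -> sg ^+ 2 \in Crat -> forall k,
  exists a b, [/\ a \in Crat, b \in Crat, ((x + sg) / 2) ^+ k = a + b * sg &
              ((x - sg) / 2) ^+ k = a - b * sg].
Proof.
move=> Hx He; elim => [|k [a [b [Ha Hb E1 E2]]]].
  by exists 1, 0; split; rewrite ?rpred0 ?rpred1 ?expr0 ?mul0r ?addr0 ?subr0.
exists ((a * x + b * sg ^+ 2) / 2), ((a + b * x) / 2); split.
- by apply: rpred_div; [apply: rpredD; apply: rpredM | apply: rpred_nat].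
- by apply: rpred_div; [apply: rpredD => //; apply: rpredM | apply: rpred_nat].
- by rewrite exprSr E1; field.
- by rewrite exprSr E2; field.
Qed.


Section Main.
Variables (n : nat) (d R : rat) (zeta : algC).
Hypotheses (Hodd : odd n) (Hn3 : (3 <= n)%N) (Hd : d != 0)
  (HR : ~ exists q : rat, q ^+ 2 = R) (Hz : n.-primitive_root zeta).

Local Notation m := (n./2).
Local Notation Dc := (ratr (Dval d R) : algC).
Local Notation r := (sqrtC (ratr R : algC)).
Local Notation dc := (ratr d : algC).
Local Notation P := (map_poly (ratr : rat -> algC) (fpoly n d R)).

Lemma n_gt0 : (0 < n)%N. Proof. lia. Qed.
Lemma nE : n = m.*2.+1.
Proof. by rewrite -{1}(odd_double_half n) Hodd add1n. Qed.
Lemma R_nz : R != 0.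
Proof. by apply/negP => /eqP H; apply: HR; exists 0; rewrite H expr0n. Qed.
Lemma Dq_nz : Dval d R != 0.
Proof.
apply/negP => /eqP H; apply: HR; exists d.
by apply/eqP; rewrite -subr_eq0 -H.
Qed.
Lemma Dc_nz : Dc != 0. Proof. by rewrite fmorph_eq0 Dq_nz. Qed.
Lemma r2 : r ^+ 2 = ratr R. Proof. exact: sqrtCK. Qed.
Lemma r_nz : r != 0.
Proof.
apply/negP => /eqP H; move: r2; rewrite H expr0n /= => /esym/eqP.
by rewrite fmorph_eq0 (negbTE R_nz).
Qed.
Lemma DcE : Dc = (dc + r) * (dc - r).
Proof.
have := r2; move: (sqrtC _) => s Hs.
by rewrite /Dval rmorphB rmorphXn /= -Hs; ring.
Qed.
Lemma KcE : ratr (2 * d * Dval d R ^+ m) = 2 * dc * Dc ^+ m :> algC.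
Proof. by rewrite !rmorphM rmorphXn rmorph_nat. Qed.
Lemma zn1 : zeta ^+ n = 1. Proof. exact: prim_expr_order Hz. Qed.
Lemma z_nz : zeta != 0.
Proof.
apply/negP => /eqP H; move: zn1; rewrite H expr0n.
by case: n n_gt0 => // k _ /eqP; rewrite eq_sym oner_eq0.
Qed.

Lemma evalP v : v != 0 -> P.[v + Dc / v] = v ^+ n + Dc ^+ n / v ^+ n - 2 * dc * Dc ^+ m.
Proof. by move=> vnz; rewrite fpoly_eval ?n_gt0 // expr_div_n KcE. Qed.

Lemma powE (y : algC) : y ^+ n = y ^+ m * y ^+ m * y.
Proof. by rewrite {1}nE exprS -addnn exprD mulrC. Qed.

Lemma solve v : v != 0 -> P.[v + Dc / v] = 0 ->
  exists u, [/\ u != 0, u ^+ n = Dc ^+ m * (dc + r) & u + Dc / u = v + Dc / v].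
Proof.
move=> vnz; rewrite evalP // => E.
have wnz : v ^+ n != 0 by rewrite expf_neq0.
have Mnz : Dc ^+ m != 0 by rewrite expf_neq0 // Dc_nz.
have Hpm : (dc + r) != 0 /\ (dc - r) != 0.
  by move: Dc_nz; rewrite DcE mulf_eq0 negb_or => /andP.
case: Hpm => Hp Hm.
rewrite powE in E.
have [w Ew] : exists w, w = v ^+ n by eexists.
have [M EM] : exists M, M = Dc ^+ m by eexists.
rewrite -Ew -EM in E wnz; rewrite -EM in Mnz; rewrite [in X in X / _]DcE in E.
have H : (w - M * (dc + r)) * (w - M * (dc - r)) = 0.
  by rewrite -[RHS](mulr0 w) -E; field.
move/eqP: H; rewrite mulf_eq0 => /orP [/eqP H1 | /eqP H2].
  exists v; split => //; rewrite -Ew -EM; apply/eqP; by rewrite -subr_eq0 H1.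
exists (Dc / v); split.
- by rewrite mulf_eq0 negb_or Dc_nz invr_eq0.
- have Hw : w = M * (dc - r) by apply/eqP; rewrite -subr_eq0 H2.
  rewrite expr_div_n powE -Ew -EM Hw [in X in X / _]DcE; field.
  by rewrite Mnz Hm.
- by field; rewrite vnz Dc_nz.
Qed.

Lemma root_of u : u != 0 -> u ^+ n = Dc ^+ m * (dc + r) -> root P (u + Dc / u).
Proof.
move=> unz Hu; rewrite /root evalP // powE Hu.
have Mnz : Dc ^+ m != 0 by rewrite expf_neq0 // Dc_nz.
have Hpm : (dc + r) != 0 /\ (dc - r) != 0.
  by move: Dc_nz; rewrite DcE mulf_eq0 negb_or => /andP.
case: Hpm => Hp Hm.
move: Mnz; have [M <-] : exists M, M = Dc ^+ m by eexists.
move=> Mnz; rewrite [in X in X / _]DcE; apply/eqP; field.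
by rewrite Mnz Hp.
Qed.

Lemma roots_char v0 z : v0 != 0 -> v0 ^+ n = Dc ^+ m * (dc + r) -> root P z ->
  exists k : nat, z = zeta ^+ k * v0 + Dc / (zeta ^+ k * v0).
Proof.
move=> v0nz Hv0 Hz0.
have [v [vnz Hv]] := quad_solve Dc z Dc_nz.
have [u [unz Hu Huv]] : exists u, [/\ u != 0, u ^+ n = Dc ^+ m * (dc + r) & u + Dc / u = v + Dc / v].
  by apply: solve => //; rewrite Hv; apply/eqP.
have H1 : (u / v0) ^+ n = 1 by rewrite expr_div_n Hu Hv0 divff // -Hv0 expf_neq0.
have [i Hi] := prim_rootP Hz H1.
exists i; by rewrite -Hi divfK // Huv Hv.
Qed.

Lemma c_exists v0 x : v0 != 0 -> v0 ^+ n = Dc ^+ m * (dc + r) -> x \in Crat ->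
  v0 + Dc / v0 = x ->
  exists c, [/\ c \in Crat, c != 0 & v0 - Dc / v0 = c * r].
Proof.
move=> v0nz Hv0 Hx Hxv.
set s := v0 - Dc / v0.
have DcC : Dc \in Crat by apply: Crat_rat.
have Hs2 : s ^+ 2 \in Crat.
  have -> : s ^+ 2 = x ^+ 2 - 4 * Dc by rewrite -Hxv /s; field.
  by apply: rpredB; [apply: rpredX | apply: rpredM => //; apply: rpred_nat].
have [a [b [Ha Hb E1 E2]]] := pow_split x s Hx Hs2 n.
have Ev0 : (x + s) / 2 = v0 by rewrite -Hxv /s; field.
have Ev1 : (x - s) / 2 = Dc / v0 by rewrite -Hxv /s; field.
rewrite Ev0 Hv0 in E1; rewrite Ev1 expr_div_n Hv0 powE in E2.
have Mnz : Dc ^+ m != 0 by rewrite expf_neq0 // Dc_nz.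
have Hpm : (dc + r) != 0 /\ (dc - r) != 0.
  by move: Dc_nz; rewrite DcE mulf_eq0 negb_or => /andP.
case: Hpm => Hp Hm.
have MC : Dc ^+ m \in Crat by rewrite rpredX.
move: E1 E2 Mnz MC; have [M <-] : exists M, M = Dc ^+ m by eexists.
move=> E1 E2 Mnz MC.
rewrite [in X in X / _]DcE in E2.
have E3 : M * (dc - r) = a - b * s by rewrite -E2; field; rewrite Mnz Hp.
have E4 : b * s = M * r.
  have -> : b * s = ((a + b * s) - (a - b * s)) / 2 by field.
  by rewrite -E1 -E3; field.
have bnz : b != 0.
  apply/negP => /eqP b0; move: E4; rewrite b0 mul0r => /esym/eqP.
  by rewrite mulf_eq0 (negbTE Mnz) (negbTE r_nz).
exists (M / b); split.
- by rewrite rpred_div.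
- by rewrite mulf_eq0 negb_or Mnz invr_eq0 bnz.
- by apply: (mulfI bnz); rewrite E4; field.
Qed.

Local Notation Ak k := (zeta ^+ k + (zeta ^+ k)^-1).
Local Notation Bk k := (r * (zeta ^+ k - (zeta ^+ k)^-1)).
Local Notation beta := (r * (zeta - zeta^-1)).
Local Notation F := (gen_field (fun z => z = beta)).

Lemma FB1 : F (Bk 1). Proof. by apply: gfS; rewrite expr1. Qed.

Lemma A2E : Ak 2 = (Bk 1) ^+ 2 / ratr R + 2.
Proof.
have key : forall s y : algC, s != 0 -> y != 0 ->
    y ^+ 2 + (y ^+ 2)^-1 = (s * (y ^+ 1 - (y ^+ 1)^-1)) ^+ 2 / s ^+ 2 + 2.
  by move=> s y snz ynz; field; rewrite snz ynz.
by have := key _ _ r_nz z_nz; rewrite r2.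
Qed.

Lemma FA2 : F (Ak 2).
Proof.
rewrite A2E; apply: gfD; last exact: gf_nat.
apply: gfdiv; [apply: gfX; exact: FB1 | exact: gf_rat].
Qed.

Lemma A_rec k : Ak k.+4 = Ak 2 * Ak k.+2 - Ak k.
Proof.
have := z_nz; rewrite !exprSr expr0 mul1r.
move: (zeta ^+ k) (expf_neq0 k z_nz) => y ynz zn; field; by rewrite ynz zn.
Qed.

Lemma B_rec k : Bk k.+4 = Ak 2 * Bk k.+2 - Bk k.
Proof.
have := z_nz; rewrite !exprSr expr0 mul1r.
move: (zeta ^+ k) (expf_neq0 k z_nz) => y ynz zn; field; by rewrite ynz zn.
Qed.

Lemma B3E : Bk 3 = Ak 2 * Bk 1 + Bk 1.
Proof.
have := z_nz; rewrite !exprSr expr0 mul1r => zn; field; by rewrite zn.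
Qed.

Lemma FA_even j : F (Ak (2 * j)) /\ F (Ak (2 * j).+2).
Proof.
elim: j => [|j [IH1 IH2]].
  split; last exact: FA2.
  by rewrite muln0 expr0 invr1; apply: gfD; apply: gf1.
split.
  by have -> : (2 * j.+1 = (2 * j).+2)%N by lia.
have -> : ((2 * j.+1).+2 = (2 * j).+4)%N by lia.
rewrite A_rec; apply: gfB => //; apply: gfM => //; exact: FA2.
Qed.

Lemma FB_odd j : F (Bk (2 * j).+1) /\ F (Bk (2 * j).+3).
Proof.
elim: j => [|j [IH1 IH2]].
  split; first exact: FB1.
  rewrite B3E; apply: gfD; [apply: gfM; [exact: FA2|exact: FB1]|exact: FB1].
split.
  by have -> : ((2 * j.+1).+1 = (2 * j).+3)%N by lia.
have -> : ((2 * j.+1).+3 = ((2 * j).+1).+4)%N by lia.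
rewrite (B_rec (2 * j).+1); apply: gfB => //; apply: gfM => //; exact: FA2.
Qed.

Lemma zpow_n k : zeta ^+ (k + n) = zeta ^+ k.
Proof. by rewrite exprD zn1 mulr1. Qed.

Lemma FA k : F (Ak k).
Proof.
case Hk: (odd k).
  rewrite -zpow_n.
  have -> : (k + n = 2 * ((k + n)./2))%N.
    by rewrite -{1}(odd_double_half (k + n)) oddD Hk Hodd /= mul2n.
  exact: (FA_even _).1.
have -> : (k = 2 * k./2)%N by rewrite -{1}(odd_double_half k) Hk mul2n.
exact: (FA_even _).1.
Qed.

Lemma FB k : F (Bk k).
Proof.
case Hk: (odd k).
  have -> : (k = (2 * k./2).+1)%N by rewrite -{1}(odd_double_half k) Hk mul2n.
  exact: (FB_odd _).1.
rewrite -zpow_n.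
have -> : (k + n = (2 * ((k + n)./2)).+1)%N.
  by rewrite -{1}(odd_double_half (k + n)) oddD Hk Hodd /= mul2n.
exact: (FB_odd _).1.
Qed.

Lemma root_in_K v0 x c k : v0 != 0 -> c \in Crat -> x \in Crat ->
  v0 + Dc / v0 = x -> v0 - Dc / v0 = c * r ->
  F (zeta ^+ k * v0 + Dc / (zeta ^+ k * v0)).
Proof.
move=> v0nz Hc Hx Hxv Hs.
have E : zeta ^+ k * v0 + Dc / (zeta ^+ k * v0) =
   ((v0 + Dc / v0) * Ak k + (v0 - Dc / v0) * (zeta ^+ k - (zeta ^+ k)^-1)) / 2.
  move: (zeta ^+ k) (expf_neq0 k z_nz) => y ynz; field; by rewrite ynz v0nz.
rewrite E Hxv Hs -mulrA.
apply: gfdiv; last exact: gf_nat.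
apply: gfD; apply: gfM.
- exact: gf_Crat.
- exact: FA.
- exact: gf_Crat.
- exact: FB.
Qed.

Lemma u_pow (u v0 : algC) : u ^+ n = 1 -> (u * v0) ^+ n = v0 ^+ n.
Proof. by move=> H; rewrite exprMn H mul1r. Qed.

Lemma main : (exists q : rat, root (fpoly n d R) q) ->
  forall y : algC,
    splitting_field_C (fpoly n d R) y <->
    gen_field (fun z => z = sqrtC (ratr R) * (zeta - zeta^-1)) y.
Proof.
move=> [q Hq] y.
have HxP : root P (ratr q) by rewrite rmorph_root.
have [v [vnz Hv]] := quad_solve Dc (ratr q) Dc_nz.
have [v0 [v0nz Hv0 Hv0v]] : exists v0, [/\ v0 != 0, v0 ^+ n = Dc ^+ m * (dc + r) & v0 + Dc / v0 = v + Dc / v].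
  by apply: solve => //; rewrite Hv; apply/eqP.
have Hxv : v0 + Dc / v0 = ratr q by rewrite Hv0v.
have [c [Hc cnz Hs]] := c_exists v0 (ratr q) v0nz Hv0 (Crat_rat q) Hxv.
split.
- apply: gf_mono => z Hz0.
  have [k ->] := roots_char v0 z v0nz Hv0 Hz0.
  exact: (root_in_K v0 (ratr q) c k v0nz Hc (Crat_rat q)).
- apply: gf_mono => z ->.
  have zinv : zeta^-1 ^+ n = 1 by rewrite exprVn zn1 invr1.
  have E : beta = ((zeta * v0 + Dc / (zeta * v0)) - (zeta^-1 * v0 + Dc / (zeta^-1 * v0))) / c.
    have -> : (zeta * v0 + Dc / (zeta * v0)) - (zeta^-1 * v0 + Dc / (zeta^-1 * v0))
        = (zeta - zeta^-1) * (v0 - Dc / v0).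
      by field; rewrite z_nz v0nz.
    rewrite Hs; field; by rewrite cnz z_nz.
  rewrite E; apply: gfdiv; last exact: gf_Crat.
  apply: gfB; apply: gfS.
  + apply: root_of; first by rewrite mulf_eq0 negb_or z_nz v0nz.
    by rewrite u_pow ?zn1.
  + apply: root_of; first by rewrite mulf_eq0 negb_or invr_eq0 z_nz v0nz.
    by rewrite u_pow.
Qed.
End Main.

Theorem corollary1 (n : nat) (d R : rat) (zeta : algC) :
  odd n -> (3 <= n)%N -> d != 0 -> ~ (exists q : rat, q ^+ 2 = R) ->
  n.-primitive_root zeta ->
  (exists q : rat, root (fpoly n d R) q) ->
  forall x : algC,
    splitting_field_C (fpoly n d R) x <->
    gen_field (fun z => z = sqrtC (ratr R) * (zeta - zeta^-1)) x.
Proof. move=> H1 H2 H3 H4 H5; exact: main. Qed.
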